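(* Let $(u,g,r)$ be a symmetric RUM-CF and let $(p,f)$ be an SCF-RT generated by it, i.e. rationalized by $(u,g,r)$. Then for any $(x,y)\in D$, with $q=p(x,y)/p(y,x)$: if $u(x)\geq u(y)$ then $F(y,x)$ $q$-FSD $F(x,y)$, and if $u(x)>u(y)$ then $F(y,x)$ $q$-SFSD $F(x,y)$.
   Context: $X$ is a finite set of options; $C=\{(x,y): x,y\in X,\ x\neq y\}$; $D\subseteq C$ is a fixed non-empty set with $(x,y)\in D\Rightarrow (y,x)\in D$. An SCF $p$ assigns to each $(x,y)\in D$ a number $p(x,y)>0$ with $p(x,y)+p(y,x)=1$. An SCF-RT is a pair $(p,f)$ where $p$ is an SCF and $f$ assigns to each $(x,y)\in D$ a strictly positive density $f(x,y)$ on $\mathbb{R}^+$ with cdf $F(x,y)$. A RUM is a pair $(u,g)$ with $u:X\to\mathbb{R}$ and $g$ assigning to each $(x,y)\in C$ a density $g(x,y)$ on $\mathbb{R}$ (cdf $G(x,y)$) with $\int v\,g(x,y)(v)\,dv=u(x)-u(y)=:v(x,y)$, $g(x,y)(v)=g(y,x)(-v)$ for all $v$, and connected support. A RUM-CF is $(u,g,r)$ with $(u,g)$ a RUM and $r:\mathbb{R}^{++}\to\mathbb{R}^+$ continuous, strictly decreasing where $r(v)>0$, $\lim_{v\to0}r(v)=\infty$, $\lim_{v\to\infty}r(v)=0$; $r^{-1}(t)$ ($t>0$) is the inverse of $r$ restricted to $\{r>0\}$. It rationalizes $(p,f)$ if for all $(x,y)\in D$: $G(x,y)(0)=p(y,x)$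 and $\frac{1-G(x,y)(r^{-1}(t))}{1-G(x,y)(0)}=F(x,y)(t)$ for all $t>0$. It is symmetric if $g(x,y)(v(x,y)+\delta)=g(x,y)(v(x,y)-\delta)$ for all $(x,y)\in C$, $\delta\geq0$. For cdfs $G,H$ on $\mathbb{R}^+$ and $q>0$, $G$ $q$-FSD $H$ means $G(t)\leq qH(t)$ for all $t\geq0$; $q$-SFSD means additionally strict inequality for some $t$. *)

(* Defs.v *)
From HB Require Import structures.
From mathcomp Require Import all_boot all_order all_algebra.
From mathcomp Require Import all_classical all_reals all_analysis.
Set Implicit Arguments. Unset Strict Implicit. Unset Printing Implicit Defensive.
Import Order.TTheory GRing.Theory Num.Theory.
Import numFieldNormedType.Exports.
Local Open Scope classical_set_scope.
Local Open Scope ring_scope.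

Section Defs.
Variable R : realType.
Local Notation mu := (@lebesgue_measure R).

Definition cdfR (g : R -> R) (t : R) : R :=
  fine (\int[mu]_(v in `]-oo, t]) (g v)%:E)%E.

Definition cdfRp (f : R -> R) (t : R) : R :=
  fine (\int[mu]_(v in `[0%R, t]) (f v)%:E)%E.

Definition density_R (g : R -> R) : Prop :=
  measurable_fun setT g /\ (forall v, 0 <= g v) /\
  (\int[mu]_(v in setT) (g v)%:E = 1)%E.

Definition pos_density_Rp (f : R -> R) : Prop :=
  measurable_fun (`[0%R, +oo[ : set R) f /\ (forall t, 0 <= t -> 0 < f t) /\
  (\int[mu]_(t in `[0%R, +oo[) (f t)%:E = 1)%E.

Definition dsupport (g : R -> R) : set R := closure [set v | 0 < g v].

Definition inC (X : finType) (x y : X) : Prop := x <> y.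

Definition valid_D (X : finType) (D : {set X * X}) : Prop :=
  (exists xy, xy \in D) /\
  (forall x y, (x, y) \in D -> x <> y) /\
  (forall x y, (x, y) \in D -> (y, x) \in D).

Definition is_SCF (X : finType) (D : {set X * X}) (p : X -> X -> R) : Prop :=
  forall x y, (x, y) \in D -> 0 < p x y /\ p x y + p y x = 1.

Definition is_SCF_RT (X : finType) (D : {set X * X}) (p : X -> X -> R)
  (f : X -> X -> R -> R) : Prop :=
  is_SCF D p /\ forall x y, (x, y) \in D -> pos_density_Rp (f x y).

Definition is_RUM (X : finType) (u : X -> R) (g : X -> X -> R -> R) : Prop :=
  forall x y : X, inC x y ->
    density_R (g x y) /\
    mu.-integrable setT (fun v => (v * g x y v)%:E) /\
    (\int[mu]_(v in setT) (v * g x y v)%:E = (u x - u y)%:E)%E /\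
    (forall v, g x y v = g y x (- v)) /\
    connected (dsupport (g x y)).

Definition is_CF (r : R -> R) : Prop :=
  (forall v, 0 < v -> 0 <= r v) /\
  {within `]0, +oo[, continuous r} /\
  (forall a b, 0 < a -> a < b -> 0 < r a -> 0 < r b -> r b < r a) /\
  (r x @[x --> 0^'+] --> +oo) /\
  (r x @[x --> +oo] --> 0).

Definition is_RUM_CF (X : finType) (u : X -> R) (g : X -> X -> R -> R)
  (r : R -> R) : Prop := is_RUM u g /\ is_CF r.

(* (u,g,r) rationalizes (p,f).  r^{-1}(t) for t > 0 is the (unique) v > 0
   with r v = t, so the condition is stated for every such v. *)
Definition rationalizes (X : finType) (D : {set X * X}) (u : X -> R)
  (g : X -> X -> R -> R) (r : R -> R) (p : X -> X -> R)
  (f : X -> X -> R -> R) : Prop :=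
  forall x y, (x, y) \in D ->
    cdfR (g x y) 0 = p y x /\
    (forall t v, 0 < t -> 0 < v -> r v = t ->
       (1 - cdfR (g x y) v) / (1 - cdfR (g x y) 0) = cdfRp (f x y) t).

Definition symmetric_RUM (X : finType) (u : X -> R) (g : X -> X -> R -> R) : Prop :=
  forall x y : X, inC x y -> forall d, 0 <= d ->
    g x y ((u x - u y) + d) = g x y ((u x - u y) - d).

Definition qFSD (G H : R -> R) (q : R) : Prop :=
  forall t, 0 <= t -> G t <= q * H t.
Definition qSFSD (G H : R -> R) (q : R) : Prop :=
  qFSD G H q /\ exists t, 0 <= t /\ G t < q * H t.

End Defs.

(* Main.v *)
Require Import Defs.
From HB Require Import structures.
From mathcomp Require Import all_boot all_order all_algebra.
From mathcomp Require Import all_classical all_reals all_analysis measurable_realfun.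
From mathcomp Require Import ring lra.
Import Order.TTheory GRing.Theory Num.Theory.
Import numFieldNormedType.Exports.
Local Open Scope ring_scope.

Section H.
Local Open Scope classical_set_scope.
Variable R : realType.
Local Notation mu := (@lebesgue_measure R).

Lemma mshift (c : R) : measurable_fun (setT : set (measurableTypeR R)) ((fun x : R => x + c) : measurableTypeR R -> measurableTypeR R).
Proof. by apply: measurable_funD => //; exact: measurable_cst. Qed.

Lemma shift_measure (c : R) (A : set R) : measurable A ->
  pushforward mu ((fun x : R => x + c) : _ -> measurableTypeR R) A = mu A.
Proof.
move=> mA; apply/esym. 
have := mshift c => mc.
apply: lebesgue_measure_unique => //= _ [[a b]] _ <-.
rewrite /pushforward.
have -> : (fun x : R => x + c) @^-1` `]a, b] = `](a - c), (b - c)]%classic.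
  apply/seteqP; split => z /=; rewrite !in_itv /= ?lerBrDr ?ltrBlDr //.
rewrite !lebesgue_measure_itv /= !lte_fin ltrD2r.
by case: ifP => // _; rewrite -EFinB; congr EFin; rewrite opprB addrA subrK.
Qed.
Lemma shift_integral (h : R -> R) (c v : R) : measurable_fun setT h ->
  (forall x, 0 <= h x) ->
  (\int[mu]_(s in `]-oo, v]) (h (s + c)%R)%:E = \int[mu]_(s in `]-oo, (v + c)%R]) (h s)%:E)%E.
Proof.
move=> mh h0.
rewrite (_ : `]-oo, v]%classic = ((fun x : R => x + c) : _ -> measurableTypeR R) @^-1` `]-oo, (v + c)%R]); last first.
  by apply/seteqP; split => z /=; rewrite !in_itv /= lerD2r.
rewrite -(ge0_integral_pushforward (mshift c) mu (D := `]-oo, (v + c)%R]%classic) (f := fun s => (h s)%:E)) //.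
- apply: eq_measure_integral => //=.
  + by move=> A mA; apply: (mshift c).
  + by move=> mf A mA _; rewrite -(shift_measure c).
- apply: measurable_funTS.
  exact/measurable_EFinP.
- by move=> y _; rewrite lee_fin.
Qed.
Lemma cdfR_fin (h : R -> R) x : density_R h ->
  (\int[mu]_(v in `]-oo, x]) (h v)%:E)%E \is a fin_num.
Proof.
case=> mh [h0 h1].
rewrite ge0_fin_numE; last by apply: integral_ge0 => *; rewrite lee_fin.
apply: (@le_lt_trans _ _ (\int[mu]_(v in setT) (h v)%:E)%E); last by rewrite h1 ltey.
apply: ge0_subset_integral => //=.
- exact/measurable_EFinP.
- by move=> *; rewrite lee_fin.
Qed.

Lemma cdfR_le (h : R -> R) a b : density_R h -> a <= b -> cdfR h a <= cdfR h b.
Proof.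
move=> dh ab; rewrite /cdfR; apply: fine_le; try exact: cdfR_fin.
case: dh => mh [h0 h1].
apply: ge0_subset_integral => //=.
- exact/measurable_EFinP/measurable_funTS.
- by move=> *; rewrite lee_fin.
- by move=> z /=; rewrite !in_itv /= => /le_trans; apply.
Qed.

Lemma cdfRp_fin (f : R -> R) (x : R) : pos_density_Rp f ->
  (\int[mu]_(v in `[0%R, x]) (f v)%:E)%E \is a fin_num.
Proof.
case=> mf [f0 f1].
rewrite ge0_fin_numE; last first.
  apply: integral_ge0 => z; rewrite /= in_itv /= => /andP[z0 _].
  by rewrite lee_fin ltW // f0.
apply: (@le_lt_trans _ _ (\int[mu]_(v in `[0%R, +oo[) (f v)%:E)%E); last by rewrite f1 ltey.
apply: ge0_subset_integral => //=.
- exact/measurable_EFinP.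
- by move=> z; rewrite /= in_itv /= andbT => z0; rewrite lee_fin ltW // f0.
- by move=> z /=; rewrite !in_itv /= => /andP[->].
Qed.

Lemma cdfRp0 (f : R -> R) : cdfRp f 0 = 0.
Proof. by rewrite /cdfRp set_itv1 integral_set1. Qed.

Lemma cdfRp_lt (f : R -> R) (s t : R) : pos_density_Rp f -> 0 <= s -> s < t ->
  cdfRp f s < cdfRp f t.
Proof.
move=> df s0 st; rewrite /cdfRp; apply: fine_lt; try exact: cdfRp_fin.
case: (df) => mf [f0 f1].
have mft : measurable_fun `[0%R, t] f.
  by apply: measurable_funS mf => // z /=; rewrite !in_itv /= => /andP[->].
have -> : `[0%R, t]%classic = `[0%R, s] `|` `]s, t].
  apply/seteqP; split => z /=; rewrite !in_itv /=.
    move=> /andP[z0 zt]; case: (leP z s) => zs; [left|right]; apply/andP; split => //.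
  by case=> /andP[z0 zs]; apply/andP; split; lra.
rewrite ge0_integral_setU //=; first last.
- apply/disj_setPS => z [] /=; rewrite !in_itv /= => /andP[_ zs] /andP[sz _]; lra.
- move=> z; rewrite !in_itv /= => -[/andP[z0 _]|/andP[z0 _]]; rewrite lee_fin ltW // f0 //; lra.
- apply/measurable_EFinP; apply: measurable_funS mf => //.
  move=> z /= []; rewrite !in_itv /= ?andbT => /andP[z0 zb]; lra.
rewrite lteDl; last exact: cdfRp_fin.
have mfst : measurable_fun `]s, t] (EFin \o f).
  apply/measurable_EFinP; apply: measurable_funS mf => //.
  move=> z /=; rewrite !in_itv /= ?andbT => /andP[z0 _]; lra.
rewrite lt0e; apply/andP; split; last first.
  apply: integral_ge0 => z; rewrite /= in_itv /= => /andP[z0 _]; rewrite lee_fin ltW // f0 //; lra.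
apply/negP => /eqP I0.
have : (\int[mu]_(x in `]s, t]) `|(EFin \o f) x| = 0)%E.
  rewrite -I0; apply: eq_integral => z; rewrite inE /= in_itv /= => /andP[z0 _].
  rewrite ger0_norm // ltW // f0 //; lra.
have mfst2 : measurable_fun (`]s, t]%classic : set (measurableTypeR R)) (EFin \o f) := mfst.
move=> H; have := (ae_eq_integral_abs _ _ mfst2).1 H.
move=> /(_ (measurable_itv _)) -[N [mN N0 sN]].
have : (mu `]s, t] <= mu N)%E.
  apply: le_measure; rewrite ?inE //.
  move=> z zst; apply: sN => /= /(_ zst) /eqP.
  move: zst => /=; rewrite in_itv /= => /andP[z0 _]; rewrite eqe gt_eqF // f0 //; lra.
rewrite N0 lebesgue_measure_itv /= lte_fin st /= -EFinB lee_fin.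
rewrite subr_le0 leNgt st //.
Qed.



Lemma CF_inv (r : R -> R) (t : R) : is_CF r -> 0 < t -> exists v, 0 < v /\ r v = t.
Proof.
case=> r0 [rc [rdec [rinf r0inf]]] t0.
have [a [a0 ra]] : exists a, 0 < a /\ t < r a.
  have H3 : \forall x \near 0^'+, 0 < x /\ t < r x.
    near=> x; split; near: x.
    - exact: nbhs_right_gt.
    - exact: cvgry_gt.
  have [x [x1 x2]] := filter_ex H3.
  by exists x.
have [b [ab rb]] : exists b, a < b /\ r b < t.
  have H3 : \forall x \near +oo, a < x /\ r x < t.
    near=> x; split; near: x.
    - apply: nbhs_pinfty_gt; exact: num_real.
    - exact: cvgr_lt r0inf _ t0.
  have [x [x1 x2]] := filter_ex H3.
  by exists x.
have cab : {within `[a, b], continuous r}.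
  apply: continuous_subspaceW rc => z /=; rewrite !in_itv /= andbT => /andP[az _]; lra.
have hm : Num.min (r a) (r b) <= t <= Num.max (r a) (r b).
  rewrite ge_min le_max; apply/andP; split; apply/orP; [right|left]; lra.
have [c] := IVT (ltW ab) cab hm.
rewrite in_itv /= => /andP[ac _] rc'.
exists c; split => //; lra.
Unshelve. all: by end_near.
Qed.
End H.

Theorem proposition4 (R : realType) (X : finType) (D : {set X * X})
  (p : X -> X -> R) (f : X -> X -> R -> R)
  (u : X -> R) (g : X -> X -> R -> R) (r : R -> R) :
  valid_D D ->
  is_SCF_RT D p f ->
  is_RUM_CF u g r ->
  symmetric_RUM u g ->
  rationalizes D u g r p f ->
  forall x y, (x, y) \in D ->
    let q := p x y / p y x in
    (u y <= u x -> qFSD (cdfRp (f y x)) (cdfRp (f x y)) q) /\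
    (u y < u x -> qSFSD (cdfRp (f y x)) (cdfRp (f x y)) q).
Proof.
move=> vD [scf fdens] [rum cf] sym rat x y xyD q.
have yxD : (y, x) \in D := vD.2.2 x y xyD.
have nxy : x <> y := vD.2.1 x y xyD.
have [pxy0 pxy1] := scf x y xyD.
have [pyx0 _] := scf y x yxD.
have [G0 Hxy] := rat x y xyD.
have [G0' Hyx] := rat y x yxD.
have [dg [_ [_ [gsym _]]]] := rum x y nxy.
have fxy := fdens x y xyD.
set w := u x - u y.
have shift s : g y x s = g x y (s + (w + w)).
  transitivity (g x y (- s)); first by rewrite gsym opprK.
  case: (leP 0 (s + w)) => h.
    have := sym x y nxy (s + w) h; rewrite -/w.
    rewrite (_ : w + (s + w) = s + (w + w)); last by ring.
    by rewrite (_ : w - (s + w) = - s) //; ring.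
  have := sym x y nxy (- (s + w)); rewrite -/w => H.
  rewrite (_ : - s = w - (s + w)); last by ring.
  rewrite H; last lra.
  by congr (g x y); ring.
have cdf_shift v : cdfR (g y x) v = cdfR (g x y) (v + (w + w)).
  rewrite /cdfR; congr fine.
  rewrite -(@shift_integral _ _ _ _ dg.1 dg.2.1); apply: eq_integral => s _.
  by rewrite shift.
have key t v : 0 < t -> 0 < v -> r v = t ->
    cdfRp (f y x) t = (1 - cdfR (g x y) (v + (w + w))) / p y x /\
    q * cdfRp (f x y) t = (1 - cdfR (g x y) v) / p y x.
  move=> t0 v0 rv; split.
    rewrite -(Hyx t v t0 v0 rv) cdf_shift G0'.
    by rewrite (_ : 1 - p x y = p y x) //; lra.
  rewrite -(Hxy t v t0 v0 rv) G0 (_ : 1 - p y x = p x y); last lra.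
  rewrite /q; field.
  by apply/andP; split; rewrite gt_eqF.
have part1 : u y <= u x -> qFSD (cdfRp (f y x)) (cdfRp (f x y)) q.
  move=> uxy t; rewrite le_eqVlt => /orP[/eqP <-|t0].
    by rewrite !cdfRp0 mulr0.
  have [v [v0 rv]] := @CF_inv _ _ _ cf t0.
  have [-> ->] := key t v t0 v0 rv.
  apply: ler_wpM2r; first by rewrite invr_ge0 ltW.
  rewrite lerD2l lerN2; apply: cdfR_le => //.
  rewrite /w; lra.
split => // uxy; split; first by apply: part1; exact: ltW.
have w0 : 0 < w by rewrite /w subr_gt0.
case: cf => r0 [rc [rdec [rinf r0inf]]].
have [vb [vb0 [rvb vbw]]] : exists vb, 0 < vb /\ 1 < r vb /\ vb < w.
  have H3 : \forall z \near (0^'+)%classic, 0 < z /\ 1 < r z /\ z < w.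
    near=> z; split; [|split]; near: z.
    - exact: nbhs_right_gt.
    - exact: cvgry_gt.
    - exact: nbhs_right_lt w0.
  have [z Hz] := filter_ex H3.
  by exists z.
have [va [va0 [rva vab]]] : exists va, 0 < va /\ 1 < r va /\ va < vb.
  have H3 : \forall z \near (0^'+)%classic, 0 < z /\ 1 < r z /\ z < vb.
    near=> z; split; [|split]; near: z.
    - exact: nbhs_right_gt.
    - exact: cvgry_gt.
    - exact: nbhs_right_lt vb0.
  have [z Hz] := filter_ex H3.
  by exists z.
have rba : r vb < r va by apply: rdec => //; lra.
have Fl := @cdfRp_lt _ _ _ _ fxy (ltW (lt_trans ltr01 rvb)) rba.
rewrite -(Hxy (r vb) vb (lt_trans ltr01 rvb) vb0 erefl) in Fl.
rewrite -(Hxy (r va) va (lt_trans ltr01 rva) va0 erefl) in Fl.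
rewrite ltr_pM2r in Fl; last by rewrite invr_gt0 G0; lra.
have Gle : cdfR (g x y) vb <= cdfR (g x y) (va + (w + w)).
  by apply: cdfR_le => //; lra.
exists (r va); split; first lra.
have [-> ->] := key (r va) va (lt_trans ltr01 rva) va0 erefl.
rewrite ltr_pM2r; last by rewrite invr_gt0.
lra.
Unshelve. all: by end_near.
Qed.
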